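(* Consider a market and, for every hospital $h$, a choice function $\mathrm{Ch}_h$ that satisfies substitutability (SUB), irrelevance of rejected contracts (IRC) and compatibility (COM). Then the generalized deferred acceptance mechanism run with these choice functions produces a matching $X'$ that is $B'_H$-stable, where $B'_h=\max\{B_h,w_h(X')\}$ for each $h\in H$.
   Context: A market consists of a finite set of doctors $D$, a finite set of hospitals $H$, a finite set of contracts $X\subseteq D\times H\times\mathbb{R}_{>0}$ (contract $x=(d,h,w)$ has doctor $x_D=d$, hospital $x_H=h$, wage $x_W=w$), strict preferences $\succ_d$ of each doctor $d$ over $X_d\cup\{\emptyset\}$, additive utilities $f_h$ of each hospital ($f_h(x)>0$ for $x\in X_h$, $f_h(Y)=\sum_{x\in Y}f_h(x)$), and budgets $B_h>0$ with $0<x_W\le B_h$ for all $x\in X_h$. For $Y\subseteq X$: $Y_d=\{x\in Y:x_D=d\}$, $Y_h=\{x\in Y:x_H=h\}$, $w_h(Y)=\sum_{x\in Y_h}x_W$. A matching is $Y\subseteq X$ with $|Y_d|\le1$ for all $d$. Given $B'_H=(B'_h)_h$, a matching $Y$ is $B'_H$-feasible if $w_h(Y)\le B'_h$ for all $h$; a matching $Z\subseteq X_h$ blocks $Y$ if every doctor $x_D$ with $x\in Z\setminus Y$ strictly prefers $x$ to her contract in $Y$ (or to $\emptyset$), $f_h(Z)>f_h(Y_h)$ and $w_h(Z)\le B'_h$; $Y$ is $B'_H$-stable if it is $B'_H$-feasible and not blocked by any $h$ and $Z\subseteq X_h$. A choice function of hospital $h$ is a map $\mathrm{Ch}_h:2^{X_h}\to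 2^{X_h}$ with $\mathrm{Ch}_h(Y)\subseteq Y$; set $\mathrm{Ch}_H(Y)=\bigcup_{h}\mathrm{Ch}_h(Y_h)$. For a doctor $d$, $\mathrm{Ch}_d(Y)=\{x\}$ where $x$ is the $\succ_d$-best contract in $Y_d$ if $x\succ_d\emptyset$, and $\emptyset$ otherwise; $\mathrm{Ch}_D(Y)=\bigcup_d\mathrm{Ch}_d(Y_d)$. Generalized deferred acceptance: $R^{(0)}=\emptyset$; for $i=1,2,\dots$: $Y^{(i)}=\mathrm{Ch}_D(X\setminus R^{(i-1)})$, $Z^{(i)}=\mathrm{Ch}_H(Y^{(i)})$, $R^{(i)}=R^{(i-1)}\cup(Y^{(i)}\setminus Z^{(i)})$; if $Y^{(i)}=Z^{(i)}$, output $Y^{(i)}$. Properties of $\mathrm{Ch}_h$: SUB: for all $Y''\subseteq Y'\subseteq X_h$, $Y''\setminus\mathrm{Ch}_h(Y'')\subseteq Y'\setminus\mathrm{Ch}_h(Y')$. IRC: for $Y'\subseteq X_h$ and $Y''\subseteq X_h\setminus Y'$, if $\mathrm{Ch}_h(Y'\cup Y'')\subseteq Y'$ then $\mathrm{Ch}_h(Y')=\mathrm{Ch}_h(Y'\cup Y'')$. COM: for all $Y''\subseteq Y'\subseteq X_h$ with $w_h(Y'')\le\max\{B_h,w_h(\mathrm{Ch}_h(Y'))\}$, $f_h(\mathrm{Ch}_h(Y'))\ge f_h(Y'')$. *)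

(* Defs.v *)
From HB Require Import structures.
From mathcomp Require Import all_boot all_order all_algebra.
Set Implicit Arguments. Unset Strict Implicit. Unset Printing Implicit Defensive.
Import Order.TTheory GRing.Theory Num.Theory.
Local Open Scope ring_scope.

(* Market: doctors D, hospitals H, contracts X = all elements of the finite
   type C; a contract x has doctor cD x, hospital cH x and wage cW x.
   Doctor preferences: pr d a b means "d strictly prefers a to b", where
   a, b : option C and None stands for the empty outcome (being unmatched).
   Hospital utilities: f x = f_h(x) for h = cH x (additive). *)

Section Market.
Variables (R : realFieldType) (D H C : finType).
Variables (cD : C -> D) (cH : C -> H) (cW : C -> R).
Variable pr : D -> option C -> option C -> bool.
Variable f : C -> R.

Definition Xh (h : H) : {set C} := [set x | cH x == h].
Definition restrH (Y : {set C}) (h : H) : {set C} := [set x in Y | cH x == h].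
Definition restrD (Y : {set C}) (d : D) : {set C} := [set x in Y | cD x == d].

Definition wh (h : H) (Y : {set C}) : R := \sum_(x in Y | cH x == h) cW x.
(* f_h(Y) = sum of f_h over Y (used for Y subset of X_h) *)
Definition fsum (Y : {set C}) : R := \sum_(x in Y) f x.

Definition is_matching (Y : {set C}) : Prop := forall d : D, (#|restrD Y d| <= 1)%N.

Definition pdom (d : D) (o : option C) : bool :=
  if o is Some x then cD x == d else true.

Definition strict_total_pref : Prop :=
  forall d : D,
    (forall a, pdom d a -> ~~ pr d a a) /\
    (forall a b c, pdom d a -> pdom d b -> pdom d c ->
        pr d a b -> pr d b c -> pr d a c) /\
    (forall a b, pdom d a -> pdom d b -> a != b -> pr d a b || pr d b a).

Definition Ch_d (Y : {set C}) (d : D) : {set C} :=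
  match [pick x in restrD Y d |
           pr d (Some x) None &&
           [forall y in restrD Y d, (y != x) ==> pr d (Some x) (Some y)]] with
  | Some x => [set x]
  | None => set0
  end.

Definition Ch_D (Y : {set C}) : {set C} := \bigcup_(d : D) Ch_d (restrD Y d) d.

Variable Ch : H -> {set C} -> {set C}.

Definition Ch_H (Y : {set C}) : {set C} := \bigcup_(h : H) Ch h (restrH Y h).

(* Generalized deferred acceptance.  Index k here corresponds to round
   i = k+1 of the paper: rej k = R^{(k)}, Yr k = Y^{(k+1)}, Zr k = Z^{(k+1)}. *)
Fixpoint rej (k : nat) : {set C} :=
  match k with
  | 0 => set0
  | k'.+1 => let Y := Ch_D (~: rej k') in rej k' :|: (Y :\: Ch_H Y)
  end.
Definition Yr (k : nat) : {set C} := Ch_D (~: rej k).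
Definition Zr (k : nat) : {set C} := Ch_H (Yr k).

Definition is_choice_function : Prop :=
  forall (h : H) (Y : {set C}), Y \subset Xh h -> Ch h Y \subset Y.

Definition SUB (h : H) : Prop :=
  forall Y'' Y' : {set C}, Y'' \subset Y' -> Y' \subset Xh h ->
    (Y'' :\: Ch h Y'') \subset (Y' :\: Ch h Y').

Definition IRC (h : H) : Prop :=
  forall Y' Y'' : {set C}, Y' \subset Xh h -> Y'' \subset (Xh h :\: Y') ->
    Ch h (Y' :|: Y'') \subset Y' -> Ch h Y' = Ch h (Y' :|: Y'').

Definition COM (B : H -> R) (h : H) : Prop :=
  forall Y'' Y' : {set C}, Y'' \subset Y' -> Y' \subset Xh h ->
    wh h Y'' <= Num.max (B h) (wh h (Ch h Y')) ->
    fsum Y'' <= fsum (Ch h Y').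

Definition contract_of (Y : {set C}) (d : D) : option C :=
  [pick y in restrD Y d].

Definition feasible (B' : H -> R) (Y : {set C}) : Prop :=
  is_matching Y /\ forall h : H, wh h Y <= B' h.

Definition blocks (B' : H -> R) (Y : {set C}) (h : H) (Z : {set C}) : Prop :=
  [/\ Z \subset Xh h, is_matching Z,
      (forall x, x \in Z :\: Y -> pr (cD x) (Some x) (contract_of Y (cD x))),
      fsum (restrH Y h) < fsum Z
    & wh h Z <= B' h].

Definition stable (B' : H -> R) (Y : {set C}) : Prop :=
  feasible B' Y /\ ~ (exists (h : H) (Z : {set C}), blocks B' Y h Z).

End Market.

(* Main.v *)
Require Import Defs.
From HB Require Import structures.
From mathcomp Require Import all_boot all_order all_algebra.
Import Order.TTheory GRing.Theory Num.Theory.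
Set Implicit Arguments. Unset Strict Implicit. Unset Printing Implicit Defensive.
Section Prefs.
Variables (D H C : finType) (cD : C -> D) (cH : C -> H).
Variable pr : D -> option C -> option C -> bool.
Variable Ch : H -> {set C} -> {set C}.
Hypothesis Hpr : strict_total_pref cD pr.

Lemma p_irr x : ~~ pr (cD x) (Some x) (Some x).
Proof. by have [h _] := Hpr (cD x); apply: h => /=. Qed.

Lemma p_trans x y z : cD y = cD x -> cD z = cD x ->
  pr (cD x) (Some x) (Some y) -> pr (cD x) (Some y) (Some z) -> pr (cD x) (Some x) (Some z).
Proof. by move=> ey ez; have [_ [h _]] := Hpr (cD x); apply: h => //=; apply/eqP. Qed.

Lemma p_transN x y : cD y = cD x ->
  pr (cD x) (Some x) (Some y) -> pr (cD x) (Some y) None -> pr (cD x) (Some x) None.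
Proof. by move=> ey; have [_ [h _]] := Hpr (cD x); apply: h => //=; apply/eqP. Qed.

Lemma p_tot x y : cD y = cD x -> x != y ->
  pr (cD x) (Some x) (Some y) || pr (cD x) (Some y) (Some x).
Proof.
move=> ey nxy; have [_ [_ h]] := Hpr (cD x); apply: h => /=.
- by [].
- by apply/eqP.
- by [].
Qed.

Lemma p_asym x y : cD y = cD x -> pr (cD x) (Some x) (Some y) -> ~~ pr (cD x) (Some y) (Some x).
Proof.
move=> ey hxy; apply/negP => hyx; have := p_irr x.
by rewrite (p_trans ey (erefl (cD x)) hxy hyx).
Qed.

Definition best (S : {set C}) x := [&& x \in S, pr (cD x) (Some x) None &
  [forall y in S, (cD y == cD x) ==> (y != x) ==> pr (cD x) (Some x) (Some y)]].

Lemma best_uniq (S : {set C}) x y : best S x -> best S y -> cD x = cD y -> x = y.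
Proof.
case/and3P=> xS _ /forall_inP bx; case/and3P=> yS _ /forall_inP by_ exy.
apply/eqP; apply/negPn/negP => nxy.
have h1 := bx y yS; rewrite -exy eqxx eq_sym nxy /= in h1.
have h2 := by_ x xS; rewrite exy eqxx nxy /= in h2.
by have := p_asym exy h2; rewrite -exy h1.
Qed.

Lemma best_sub (S S' : {set C}) x : S' \subset S -> x \in S' -> best S x -> best S' x.
Proof.
move=> sS xS' /and3P[_ acc /forall_inP b]; rewrite /best xS' acc /=.
by apply/forall_inP => y yS'; apply: b; apply: (subsetP sS).
Qed.

Lemma Ch_DP (S : {set C}) x : (x \in Ch_D cD pr S) = best S x.
Proof.
rewrite /Ch_D; apply/bigcupP/idP.
  case=> d _; rewrite /Ch_d; case: pickP => [z /andP[zin /andP[acc /forall_inP Hz]]|_];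
    last by rewrite inE.
  rewrite inE => /eqP ->; move: zin; rewrite !inE -andbA andbb => /andP[zS /eqP ed].
  subst d; rewrite /best zS acc /=; apply/forall_inP => y yS; apply/implyP => ey.
  by apply: Hz; rewrite !inE yS ey.
move=> bx; exists (cD x) => //; rewrite /Ch_d; case: pickP => [z /andP[zin /andP[acc Hz]]|Hn].
  move: zin; rewrite !inE -andbA andbb => /andP[zS /eqP ed].
  apply/eqP; apply: (@best_uniq S) => //.
  rewrite /best zS ed acc /=; apply/forall_inP => y yS; apply/implyP => ey.
  move/forall_inP: Hz => Hz.
  by apply: Hz; rewrite !inE yS ey.
case/and3P: (bx) => xS acc /forall_inP b.
have := Hn x; rewrite !inE xS eqxx acc /=.
move/negbT/negP; case; apply/forall_inP => y; rewrite !inE -andbA andbb => /andP[yS ey].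
by have := b y yS; rewrite ey.
Qed.

Lemma best_exists (S : {set C}) x : x \in S -> pr (cD x) (Some x) None ->
  exists m, best S m /\ cD m = cD x.
Proof.
move=> xS acc; set d := cD x.
pose P := [pred y | (y \in S) && (cD y == d) && pr d (Some y) None].
pose F y := #|[set z | (z \in S) && (cD z == d) && pr d (Some y) (Some z)]|.
have Px : P x by rewrite /P /= xS eqxx acc.
case: (arg_maxnP F Px) => m /andP[/andP[mS /eqP em] accm] mx.
exists m; split => //; rewrite /best mS em accm /=.
apply/forall_inP => y yS; apply/implyP => /eqP ey; apply/implyP => nym.
rewrite eq_sym in nym.
have := p_tot (etrans ey (esym em)) nym; rewrite em; case/orP => // hym.
exfalso.
have accy : pr d (Some y) None.
  by have := p_transN (y:=m) (etrans em (esym ey)); rewrite ey; apply.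
have Py : P y by rewrite /P /= yS ey eqxx accy.
have := mx y Py; apply/negP; rewrite -ltnNge.
apply: proper_card; apply/properP; split.
  apply/subsetP => z; rewrite !inE => /andP[/andP[zS ez] hmz]; rewrite zS ez /=.
  have := p_trans (y:=m) (z:=z) (x:=y); rewrite ey; apply => //.
  by apply/eqP.
exists m; first by rewrite !inE mS em eqxx.
by rewrite !inE mS em eqxx /= -em p_irr.
Qed.

End Prefs.
Section DA.
Variables (D H C : finType) (cD : C -> D) (cH : C -> H).
Variable pr : D -> option C -> option C -> bool.
Variable Ch : H -> {set C} -> {set C}.
Hypothesis Hpr : strict_total_pref cD pr.
Hypothesis Hch : is_choice_function cH Ch.

Local Notation rej := (rej cD cH pr Ch).
Local Notation Yr := (Yr cD cH pr Ch).
Local Notation Zr := (Zr cD cH pr Ch).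

Lemma rejS k : rej k.+1 = rej k :|: (Yr k :\: Zr k).
Proof. by []. Qed.

Lemma rej_mono j k : (j <= k)%N -> rej j \subset rej k.
Proof.
elim: k => [|k IH]; first by rewrite leqn0 => /eqP ->.
rewrite leq_eqVlt => /orP[/eqP -> //|]; rewrite ltnS => /IH sjk.
by rewrite rejS; apply: subset_trans sjk (subsetUl _ _).
Qed.

Lemma Yr_notrej k : Yr k \subset ~: rej k.
Proof. by apply/subsetP => x; rewrite /Yr (Ch_DP Hpr) => /and3P[]. Qed.

Lemma restrH_sub Y h : restrH cH Y h \subset Xh cH h.
Proof. by apply/subsetP => x; rewrite !inE => /andP[]. Qed.

Lemma Ch_H_sub Y : Ch_H cH Ch Y \subset Y.
Proof.
apply/subsetP => x /bigcupP[h _ /(subsetP (Hch (restrH_sub Y h)))].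
by rewrite inE => /andP[].
Qed.

Lemma Zr_sub k : Zr k \subset Yr k.
Proof. exact: Ch_H_sub. Qed.

Lemma restrH_Ch_H Y h : restrH cH (Ch_H cH Ch Y) h = Ch h (restrH cH Y h).
Proof.
apply/setP => x; rewrite inE; apply/andP/idP.
  case=> /bigcupP[h' _ xin] /eqP ehx.
  have := subsetP (Hch (restrH_sub Y h')) x xin; rewrite inE => /andP[_ /eqP e'].
  by rewrite -ehx e'.
move=> xin; have := subsetP (Hch (restrH_sub Y h)) x xin; rewrite inE => /andP[_ ->].
by split=> //; apply/bigcupP; exists h.
Qed.

Lemma rej_in k y : y \in rej k -> exists2 j, (j < k)%N & y \in Yr j :\: Zr j.
Proof.
elim: k => [|k IH]; first by rewrite inE.
rewrite rejS inE => /orP[/IH [j jk yj]|yk]; last by exists k.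
by exists j => //; apply: ltnW.
Qed.

Lemma persist j k y : (j <= k)%N -> y \in Yr j -> y \notin rej k -> y \in Yr k.
Proof.
move=> jk; rewrite /Yr !(Ch_DP Hpr) => yj nyk.
apply: best_sub yj; last by rewrite inE.
by rewrite setCS; apply: rej_mono.
Qed.

Lemma fixed_eq k : rej k.+1 = rej k -> Yr k = Zr k.
Proof.
move=> e; apply/eqP; rewrite eqEsubset Zr_sub andbT.
apply/subsetP => x xY; apply/negPn/negP => nxZ.
have : x \in rej k.+1 by rewrite rejS inE inE xY nxZ orbT.
by rewrite e => xr; have := subsetP (Yr_notrej k) x xY; rewrite inE xr.
Qed.

Lemma term_aux n : (exists k, rej k.+1 = rej k) \/ (n <= #|rej n|)%N.
Proof.
elim: n => [|n [Ex|IH]]; [by right | by left |].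
have [e|ne] := eqVneq (rej n.+1) (rej n); first by left; exists n.
right; apply: leq_ltn_trans IH _; apply: proper_card; rewrite properEneq eq_sym ne.
by rewrite rejS subsetUl.
Qed.

Lemma termination : exists k, Yr k = Zr k.
Proof.
case: (term_aux #|C|.+1) => [[k /fixed_eq]|]; first by exists k.
by rewrite ltnNge max_card.
Qed.

End DA.
Local Open Scope ring_scope.
Lemma wh_restr (R : realFieldType) (H C : finType) (cH : C -> H) (cW : C -> R) h Y :
  wh cH cW h (restrH cH Y h) = wh cH cW h Y.
Proof. by rewrite /wh; apply: eq_bigl => x; rewrite inE -andbA andbb. Qed.

Theorem theorem2 (R : realFieldType) (D H C : finType)
    (cD : C -> D) (cH : C -> H) (cW : C -> R)
    (pr : D -> option C -> option C -> bool) (f : C -> R) (B : H -> R)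
    (Ch : H -> {set C} -> {set C}) :
  injective (fun x : C => (cD x, cH x, cW x)) ->
  strict_total_pref cD pr ->
  (forall x : C, 0 < f x) ->
  (forall h : H, 0 < B h) ->
  (forall x : C, 0 < cW x /\ cW x <= B (cH x)) ->
  is_choice_function cH Ch ->
  (forall h : H, SUB cH Ch h) ->
  (forall h : H, IRC cH Ch h) ->
  (forall h : H, COM cH cW f Ch B h) ->
  (* the algorithm terminates ... *)
  (exists k : nat, Yr cD cH pr Ch k = Zr cD cH pr Ch k) /\
  (* ... and its output X' (the Y at the first round with Y = Z) is
     B'_H-stable with B'_h = max (B_h, w_h(X')) *)
  (forall k : nat,
     Yr cD cH pr Ch k = Zr cD cH pr Ch k ->
     (forall j : nat, (j < k)%N -> Yr cD cH pr Ch j <> Zr cD cH pr Ch j) ->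
     let X' := Yr cD cH pr Ch k in
     stable cD cH cW pr f (fun h => Num.max (B h) (wh cH cW h X')) X').
Proof.
move=> _ Hpr _ _ _ Hch Hsub Hirc Hcom.
split; first exact: termination.
move=> k Hk _ X'.
have bestX x : (x \in X') = best cD pr (~: rej cD cH pr Ch k) x by rewrite /X' /Yr (Ch_DP Hpr).
split; first split.
- move=> d; case: (set_0Vmem (restrD cD X' d)) => [->|[x xin]]; first by rewrite cards0.
  rewrite -(cards1 x); apply: subset_leq_card; apply/subsetP => y yin; rewrite inE.
  move: xin yin; rewrite !inE !bestX => /andP[bx /eqP ex] /andP[by_ /eqP ey].
  by apply/eqP; apply: (best_uniq Hpr by_ bx); rewrite ex ey.
- by move=> h; rewrite le_max lexx orbT.
case=> h [Z [ZX _ Zpref Zlt Zw]].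
set Xh' := restrH cH X' h.
set A := restrH cH (X' :|: rej cD cH pr Ch k) h.
have ZA : Z \subset A.
  apply/subsetP => x xZ; have := subsetP ZX x xZ; rewrite !inE => ->; rewrite andbT.
  case xX: (x \in X') => //=; apply/negPn/negP => nxr.
  have := Zpref x; rewrite inE xZ xX => /(_ erefl).
  rewrite /contract_of; case: pickP => [y | none].
    rewrite !inE => /andP[yX /eqP ey] hxy; have by_ := yX; rewrite bestX in by_.
    case/and3P: by_ => _ _ /forall_inP /(_ x); rewrite inE nxr ey eqxx /=.
    have -> : (x != y) by apply: contraFN xX => /eqP ->.
    move=> /= hyx; rewrite -ey in hyx hxy.
    by have := p_asym Hpr (esym ey) (hyx erefl); rewrite hxy.
  move=> acc; have xS : x \in ~: rej cD cH pr Ch k by rewrite inE.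
  have [m [bm em]] := best_exists Hpr xS acc.
  by have := none m; rewrite !inE bestX bm em eqxx.
have AX : A \subset Xh cH h by apply: restrH_sub.
have XA : Xh' \subset A.
  by apply/subsetP => z; rewrite !inE => /andP[-> ->].
have XX : Xh' \subset Xh cH h by apply: restrH_sub.
have chX : Ch h Xh' = Xh'.
  have e : X' = Ch_H cH Ch X' := Hk.
  by rewrite /Xh' {2}e restrH_Ch_H.
have chA : Ch h A \subset Xh'.
  apply/subsetP => y yC; have := subsetP (Hch _ _ AX) y yC.
  rewrite !inE => /andP[/orP[yX|yr] /eqP eh]; first by rewrite yX eh eqxx.
  exfalso; have [j jk] := rej_in yr; rewrite inE => /andP[nyZ yY].
  have sub : restrH cH (Yr cD cH pr Ch j) h \subset A.
    apply/subsetP => z; rewrite !inE => /andP[zY ->]; rewrite andbT.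
    case zr: (z \in rej cD cH pr Ch k); first by rewrite orbT.
    by rewrite (persist Hpr (ltnW jk) zY) ?zr.
  have hh := subsetP (Hsub h _ _ sub AX) y; rewrite !inE yC /= in hh.
  suff : false by []. apply: hh; rewrite yY eh eqxx andbT /=.
  have : y \notin restrH cH (Zr cD cH pr Ch j) h by rewrite inE (negPf nyZ).
  by rewrite /Zr (restrH_Ch_H Hch) andbT.
have eA : Xh' :|: (A :\: Xh') = A by rewrite -{1}(setIidPr XA) setID.
have chAX : Ch h A = Xh'.
  rewrite -[RHS]chX (Hirc h Xh' (A :\: Xh') XX) ?eA //.
  by apply: setSD.
have := Hcom h Z A ZA AX; rewrite chAX /Xh' wh_restr => /(_ Zw).
by rewrite leNgt Zlt.
Qed.
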